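(* Let $F(u,v)=F(u,v;t)=\sum_{p,q\ge1}f_{p,q}(t)u^pv^q$, where $f_{p,q}(t)=\sum_{n\ge1}t^n\,|\{e\in\mathbf{I}_n(201,210): e\text{ has parameters }(p,q)\}|$. Then $$F(u,v)=tuv+t\left(\frac{uF(u,v)-vF(v,v)}{1-v/u}+u^2v\left(\left.\frac{\partial F(u,v)}{\partial v}\right|_{v=1}-F(u,1)\right)\right).$$ Equivalently, writing $F(u,v)=\sum_{n\ge1}f_n(u,v)t^n$, we have $f_1(u,v)=uv$ and for $n\ge2$ $$f_n(u,v)=\frac{uf_{n-1}(u,v)-vf_{n-1}(v,v)}{1-v/u}+u^2v\left(\left.\frac{\partial f_{n-1}(u,v)}{\partial v}\right|_{v=1}-f_{n-1}(u,1)\right).$$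
   Context: $\mathbf{I}_n=\{(e_1,\dots,e_n)\in\mathbb{N}^n:0\le e_i<i\}$. $\mathbf{I}_n(201,210)$ is the set of $e\in\mathbf{I}_n$ with no indices $i<j<k$ such that $e_j<e_k<e_i$ and no indices $i<j<k$ such that $e_i>e_j>e_k$. The parameters of $e\in\mathbf{I}_n(201,210)$ are $(p,q)$ where $p=|\{k>e_n:(e_1,\dots,e_n,k)\in\mathbf{I}_{n+1}(201,210)\}|$ and $q=|\{k\le e_n:(e_1,\dots,e_n,k)\in\mathbf{I}_{n+1}(201,210)\}|$. *)

(* Defs.v *)
From mathcomp Require Import all_boot all_order all_algebra.
Set Implicit Arguments. Unset Strict Implicit. Unset Printing Implicit Defensive.
Import GRing.Theory Num.Theory.

(* Sequences are 0-indexed: entry e_{i+1} of the paper is [nth 0 e i]. *)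

Definition is_inv (e : seq nat) : bool :=
  all (fun i => nth 0 e i < i.+1) (iota 0 (size e)).

Definition contains201 (e : seq nat) : bool :=
  let I := iota 0 (size e) in
  has (fun i => has (fun j => has (fun k =>
    [&& i < j, j < k, nth 0 e j < nth 0 e k & nth 0 e k < nth 0 e i]) I) I) I.

Definition contains210 (e : seq nat) : bool :=
  let I := iota 0 (size e) in
  has (fun i => has (fun j => has (fun k =>
    [&& i < j, j < k, nth 0 e j < nth 0 e i & nth 0 e k < nth 0 e j]) I) I) I.

Definition inI201_210 (e : seq nat) : bool :=
  [&& is_inv e, ~~ contains201 e & ~~ contains210 e].

(* parameters (p,q); an extension (e,k) lies in I_{n+1} only if k <= n,
   so k ranges over 0..n. *)
Definition param_p (e : seq nat) : nat :=
  count (fun k => (last 0 e < k) && inI201_210 (rcons e k)) (iota 0 (size e).+1).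
Definition param_q (e : seq nat) : nat :=
  count (fun k => (k <= last 0 e) && inI201_210 (rcons e k)) (iota 0 (size e).+1).

(* f_n(u, v) as a polynomial in v, for fixed u:
   sum over e in I_n(201,210) with parameters (p,q), p,q >= 1, of u^p v^q.
   Every e in I_n has all entries < n, so I_n embeds in n.-tuple 'I_n. *)
Definition fpoly (R : numFieldType) (n : nat) (u : R) : {poly R} :=
  \sum_(t : n.-tuple 'I_n | [&& inI201_210 (map val t),
                               0 < param_p (map val t) & 0 < param_q (map val t)])
     (u ^+ param_p (map val t) *: 'X ^+ param_q (map val t)).

Definition fn (R : numFieldType) (n : nat) (u v : R) : R := (fpoly n u).[v].

(* Main.v *)
Require Import Defs.
From mathcomp Require Import all_boot all_order all_algebra.
From mathcomp Require Import zify ring lra.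
Import GRing.Theory Num.Theory.
Set Implicit Arguments. Unset Strict Implicit.

Lemma is_invP e : is_inv e <-> forall i, i < size e -> nth 0 e i <= i.
Proof.
split.
- move=> /allP H i Hi. have := H i. rewrite mem_iota add0n Hi => /(_ isT). by [].
- move=> H; apply/allP => i; rewrite mem_iota add0n => Hi. by have := H i Hi.
Qed.

Lemma c201P e : contains201 e <-> exists i j k, [/\ i < j, j < k, k < size e &
   (nth 0 e j < nth 0 e k) && (nth 0 e k < nth 0 e i)].
Proof.
rewrite /contains201; split.
- move=> /hasP [i _ /hasP [j _ /hasP [k]]]. rewrite mem_iota add0n => Hk /and4P [? ? ? ?].
  by exists i, j, k; split => //; apply/andP.
- move=> [i [j [k [Hij Hjk Hk /andP [H1 H2]]]]].
  apply/hasP; exists i; first by rewrite mem_iota; lia.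
  apply/hasP; exists j; first by rewrite mem_iota; lia.
  apply/hasP; exists k; first by rewrite mem_iota; lia.
  by apply/and4P.
Qed.

Lemma c210P e : contains210 e <-> exists i j k, [/\ i < j, j < k, k < size e &
   (nth 0 e j < nth 0 e i) && (nth 0 e k < nth 0 e j)].
Proof.
rewrite /contains210; split.
- move=> /hasP [i _ /hasP [j _ /hasP [k]]]. rewrite mem_iota add0n => Hk /and4P [? ? ? ?].
  by exists i, j, k; split => //; apply/andP.
- move=> [i [j [k [Hij Hjk Hk /andP [H1 H2]]]]].
  apply/hasP; exists i; first by rewrite mem_iota; lia.
  apply/hasP; exists j; first by rewrite mem_iota; lia.
  apply/hasP; exists k; first by rewrite mem_iota; lia.
  by apply/and4P.
Qed.

Definition goodP e x : Prop := x <= size e /\ forall i j, i < j -> j < size e ->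
  ~ (nth 0 e j < x /\ x < nth 0 e i) /\ ~ (x < nth 0 e j /\ nth 0 e j < nth 0 e i).

Lemma inIP e : inI201_210 e <-> [/\ is_inv e, ~ contains201 e & ~ contains210 e].
Proof.
rewrite /inI201_210; split.
- by move=> /and3P [H1 /negP H2 /negP H3].
- by move=> [H1 H2 H3]; apply/and3P; split => //; apply/negP.
Qed.

Lemma inI_rcons e x : inI201_210 (rcons e x) <-> inI201_210 e /\ goodP e x.
Proof.
have NR : forall i, nth 0 (rcons e x) i = if i < size e then nth 0 e i
             else if i == size e then x else 0.
  move=> i; rewrite nth_rcons; case: ltngtP => //.
split.
- move=> /inIP [/is_invP Hv H1 H2]. rewrite size_rcons in Hv.
  split; [apply/inIP; split|split].
  + apply/is_invP => i Hi. have := Hv i (ltnW Hi). rewrite NR Hi. done.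
  + move=> /c201P [i [j [k [? ? ? ?]]]]; apply: H1; apply/c201P; exists i, j, k; split => //; rewrite ?size_rcons; try lia.
    by rewrite !NR !ifT //; lia.
  + move=> /c210P [i [j [k [? ? ? ?]]]]; apply: H2; apply/c210P; exists i, j, k; split => //; rewrite ?size_rcons; try lia.
    by rewrite !NR !ifT //; lia.
  + have := Hv (size e) (ltnSn _). by rewrite NR ltnn eqxx.
  + move=> i j Hij Hj; split.
    * move=> [Ha Hb]; apply: H1; apply/c201P; exists i, j, (size e); rewrite size_rcons; split => //.
      by rewrite !NR Hj (ltn_trans Hij Hj) ltnn eqxx Ha Hb.
    * move=> [Ha Hb]; apply: H2; apply/c210P; exists i, j, (size e); rewrite size_rcons; split => //.
      by rewrite !NR Hj (ltn_trans Hij Hj) ltnn eqxx Ha Hb.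
- move=> [/inIP [/is_invP Hv H1 H2] [Hx G]]; apply/inIP; split.
  + apply/is_invP; rewrite size_rcons => i Hi; rewrite NR. case: (ltnP i (size e)) => Hie; first exact: Hv.
    have -> : i = size e by lia. by rewrite eqxx.
  + move=> /c201P [i [j [k [Hij Hjk Hk]]]]. rewrite size_rcons in Hk. rewrite !NR.
    case: (ltnP k (size e)) => Hke.
    * rewrite !ifT; try lia. move=> H; apply: H1; apply/c201P; exists i, j, k; split => //.
    * have Ek : k = size e by lia. subst k. rewrite eqxx !ifT; try lia.
      move=> /andP [Ha Hb]. have [G1 _] := G i j Hij (leq_trans Hjk Hke). by apply: G1.
  + move=> /c210P [i [j [k [Hij Hjk Hk]]]]. rewrite size_rcons in Hk. rewrite !NR.
    case: (ltnP k (size e)) => Hke.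
    * rewrite !ifT; try lia. move=> H; apply: H2; apply/c210P; exists i, j, k; split => //.
    * have Ek : k = size e by lia. subst k. rewrite eqxx !ifT; try lia.
      move=> /andP [Ha Hb]. have [_ G2] := G i j Hij (leq_trans Hjk Hke). by apply: G2.
Qed.

Definition mx (e : seq nat) := foldr maxn 0 e.

Lemma mx_ge e i : i < size e -> nth 0 e i <= mx e.
Proof.
elim: e i => [|y e IH] [|i] //= H.
- exact: leq_maxl.
- apply: leq_trans (IH i H) (leq_maxr _ _).
Qed.

Lemma mx_in e : 0 < size e -> exists2 i, i < size e & nth 0 e i = mx e.
Proof.
elim: e => [|y e IH] // _.
change (exists2 i, i < (size e).+1 & nth 0 (y::e) i = maxn y (mx e)).
case: (boolP (mx e <= y)) => H.
- exists 0 => //=. lia.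
- case: e IH H => [|z e] IH H; first by rewrite /= in H.
  have [i Hi Ei] := IH isT. exists i.+1 => //=. rewrite Ei. change (mx (z::e)) with (maxn z (mx e)) in *. lia.
Qed.

Lemma inI_entry e i : inI201_210 e -> i < size e -> nth 0 e i <= i.
Proof. by move=> /inIP [/is_invP H _ _]; apply: H. Qed.

Lemma inI_no201 e i j k : inI201_210 e -> i < j -> j < k -> k < size e ->
  ~ (nth 0 e j < nth 0 e k /\ nth 0 e k < nth 0 e i).
Proof.
move=> /inIP [_ H _] ? ? ? [? ?]; apply: H; apply/c201P; exists i, j, k; split => //.
by apply/andP.
Qed.

Lemma inI_no210 e i j k : inI201_210 e -> i < j -> j < k -> k < size e ->
  ~ (nth 0 e j < nth 0 e i /\ nth 0 e k < nth 0 e j).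
Proof.
move=> /inIP [_ _ H] ? ? ? [? ?]; apply: H; apply/c210P; exists i, j, k; split => //.
by apply/andP.
Qed.

Lemma last_nth e : last 0 e = nth 0 e (size e).-1.
Proof. by case: e => [|y e] //=; rewrite (last_nth 0) /=. Qed.

Section Facts.
Variable e : seq nat.
Hypothesis He : inI201_210 e.
Hypothesis Hn : 0 < size e.
Let n := size e.
Let a := last 0%N e.
Let m := mx e.

Lemma a_lt_n : a < n.
Proof. rewrite /a last_nth. have := @inI_entry e (size e).-1 He. rewrite /n. lia. Qed.

Lemma a_le_m : a <= m.
Proof. rewrite /a last_nth /m. apply: mx_ge. lia. Qed.

Lemma m_lt_n : m < n.
Proof. rewrite /m /n. have [i Hi <-] := @mx_in e Hn. have := inI_entry He Hi. lia. Qed.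

Lemma V1 x : m <= x -> x <= n -> goodP e x.
Proof.
move=> H1 H2; split => // i j Hij Hj.
have := mx_ge (ltn_trans Hij Hj); have := mx_ge Hj. rewrite -/m. lia.
Qed.

Lemma V2 : goodP e a.
Proof.
split; first by have := a_lt_n; lia.
move=> i j Hij Hj. rewrite /a last_nth.
case: (ltnP j (size e).-1) => Hj2.
- split.
  + apply: (inI_no201 He Hij Hj2). lia.
  + move=> [A B]; apply: (inI_no210 He Hij Hj2 _) ; [lia|lia].
- have -> : j = (size e).-1 by lia. lia.
Qed.

Lemma V3 x : a < m -> goodP e x -> x = a \/ m <= x.
Proof.
move=> Ham [Hx G].
case: (ltnP x m) => Hxm; last by right.
left. have [i0 Hi0 Ei0] := @mx_in e Hn.
have Hi0' : i0 < (size e).-1.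
  case: (ltnP i0 (size e).-1) => // H.
  have E : i0 = (size e).-1 by lia. move: Ei0; rewrite E -last_nth -/a -/m. lia.
have [G1 G2] := G i0 (size e).-1 Hi0' (ltac:(lia)).
rewrite -last_nth -/a Ei0 -/m in G1 G2. lia.
Qed.

Lemma C k x : goodP e k ->
  (goodP (rcons e k) x <->
   [/\ x <= n.+1, goodP e x \/ x = n.+1 & (m <= k \/ x = k \/ m <= x)]).
Proof.
move=> Hk.
have NR : forall i, i < n -> nth 0 (rcons e k) i = nth 0 e i.
  by move=> i Hi; rewrite nth_rcons Hi.
have NRn : nth 0 (rcons e k) n = k by rewrite nth_rcons ltnn eqxx.
have Emx : forall i, i < n -> nth 0 e i <= m by move=> i Hi; apply: mx_ge.
have Eix : forall i, i < n -> nth 0 e i <= i by move=> i Hi; apply: inI_entry.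
rewrite /goodP size_rcons; split.
- move=> [Hx G]; split => //.
  + case: (ltnP x n) => Hxn.
    * left; split; first by lia.
      move=> i j Hij Hj. rewrite -(NR i) ?(ltn_trans Hij Hj) // -(NR j) //.
      apply: G => //; lia.
    * case: (ltnP n x) => Hnx; first by right; lia.
      left; split; first by lia.
      move=> i j Hij Hj. rewrite -(NR i) ?(ltn_trans Hij Hj) // -(NR j) //.
      apply: G => //; lia.
  + case: (leqP m k) => Hmk; first by left.
    right. case: (eqVneq x k) => Hxk; first by left.
    right. case: (leqP m x) => // Hxm.
    have [i0 Hi0 Ei0] := @mx_in e Hn.
    have [G1 G2] := G i0 n Hi0 (ltnSn _).
    rewrite NRn (NR i0 Hi0) Ei0 -/m in G1 G2.
    exfalso. move: Hxk => /eqP Hxk. lia.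
- move=> [Hx Hg Hc]; split => // i j Hij Hj.
  case: (ltnP j n) => Hjn.
  + rewrite (NR i) ?(ltn_trans Hij Hjn) // (NR j) //.
    case: Hg => [[_ G]|Ex]; first by apply: G.
    have := Eix i (ltn_trans Hij Hjn); have := Eix j Hjn. rewrite Ex. lia.
  + have Ej : j = n by lia. subst j. rewrite NRn (NR i Hij).
    have := Emx i Hij. lia.
Qed.

End Facts.

Lemma cnt_int lo hi N : count (fun x => (lo <= x) && (x < hi)) (iota 0 N) = minn hi N - lo.
Proof.
elim: N => [|N IH]; first by rewrite /= minn0.
rewrite -addn1 iotaD count_cat IH /= add0n addn0.
case: (leqP lo N) => H1; case: (ltnP N hi) => H2 /=; lia.
Qed.

Lemma cnt_or (A B : pred nat) s : (forall x, ~~ (A x && B x)) ->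
  count (fun x => A x || B x) s = count A s + count B s.
Proof.
move=> H; elim: s => [|x s IH] //=. rewrite IH. have := H x.
case: (A x); case: (B x) => //= _; lia.
Qed.

Lemma cnt_ext (A B : pred nat) N : (forall x, x < N -> A x = B x) ->
  count A (iota 0 N) = count B (iota 0 N).
Proof. move=> H; apply: eq_in_count => x; rewrite mem_iota => /andP [_ Hx]; exact: H. Qed.

Definition V e x := inI201_210 (rcons e x).

Lemma V_le e x : V e x -> x <= size e.
Proof. by move=> /inI_rcons [_ [H _]]. Qed.

Lemma cnt_V (P : pred nat) e N : size e < N ->
  count (fun x => P x && V e x) (iota 0 N) = count (fun x => P x && V e x) (iota 0 (size e).+1).
Proof.
move=> H. rewrite -(subnKC H) iotaD count_cat add0n.
rewrite (@eq_in_count _ _ pred0 (iota (size e).+1 _)) ?count_pred0 ?addn0 //.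
move=> x; rewrite mem_iota => /andP [H1 _] /=.
apply/negP => /andP [_ /V_le]. lia.
Qed.

Lemma pq_def_p e : param_p e = count (fun k => (last 0 e < k) && V e k) (iota 0 (size e).+1).
Proof. by []. Qed.
Lemma pq_def_q e : param_q e = count (fun k => (k <= last 0 e) && V e k) (iota 0 (size e).+1).
Proof. by []. Qed.

Section Child.
Variable e : seq nat.
Hypothesis He : inI201_210 e.
Hypothesis Hn : 0 < size e.
Variable k : nat.
Hypothesis Hk : V e k.

Let n := size e.
Let m := mx e.

Lemma Ve'_iff x : V (rcons e k) x <->
  [/\ x <= n.+1, goodP e x \/ x = n.+1 & (m <= k \/ x = k \/ m <= x)].
Proof.
have Hk' : goodP e k by have [] := proj1 (inI_rcons e k) Hk.
rewrite /V inI_rcons -(C He Hn x Hk'). split; [by case|move=> H; split => //].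
Qed.

Lemma Ve_iff x : V e x <-> goodP e x.
Proof. rewrite /V inI_rcons; split; [by case|by split]. Qed.

Lemma CH1_p : m <= k -> param_p (rcons e k) = n.+1 - k.
Proof.
move=> Hmk. rewrite pq_def_p last_rcons size_rcons.
rewrite (@cnt_ext _ (fun x => (k.+1 <= x) && (x < n.+2))).
  rewrite cnt_int. lia.
move=> x Hx. apply/idP/idP.
- by move=> /andP [-> _].
- move=> /andP [H1 H2]; rewrite H1 /=. apply/Ve'_iff. split; try lia.
  case: (ltnP x n.+1) => H3; last by right; lia.
  left; apply: V1 => //; lia.
Qed.

Lemma CH1_q : m <= k -> param_q (rcons e k) =
   count (fun x => (x <= k) && V e x) (iota 0 n.+1).
Proof.
move=> Hmk. rewrite pq_def_q last_rcons size_rcons.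
rewrite -(@cnt_V (fun x => x <= k) e n.+2) //.
apply: cnt_ext => x Hx. apply/andP/andP => -[H1 H2]; split => //.
- move/Ve'_iff: H2 => [_ [H|H] _]; first by apply/Ve_iff.
  have := V_le Hk. rewrite -/n; lia.
- apply/Ve'_iff; split; first lia.
  + by left; apply/Ve_iff.
  + by left.
Qed.

Lemma CH2_p : k < m -> param_p (rcons e k) = n.+2 - m.
Proof.
move=> Hmk. rewrite pq_def_p last_rcons size_rcons.
rewrite (@cnt_ext _ (fun x => (m <= x) && (x < n.+2))).
  rewrite cnt_int. lia.
move=> x Hx. apply/andP/andP => -[H1 H2].
- move/Ve'_iff: H2 => [_ _ H]. split => //. lia.
- split; first lia. apply/Ve'_iff. split; try lia.
  case: (ltnP x n.+1) => H3; last by right; lia.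
  left; apply: V1 => //; lia.
Qed.

Lemma CH2_q : k < m -> param_q (rcons e k) = 1.
Proof.
move=> Hmk. rewrite pq_def_q last_rcons size_rcons.
rewrite (@cnt_ext _ (fun x => (k <= x) && (x < k.+1))).
  rewrite cnt_int. have := V_le Hk. rewrite -/n. lia.
move=> x Hx. apply/andP/andP => -[H1 H2].
- move/Ve'_iff: H2 => [_ _ H]. split; lia.
- have Ex : x = k by lia. subst x. split => //. apply/Ve'_iff. split.
  + have := V_le Hk. rewrite -/n. lia.
  + by left; apply/Ve_iff.
  + by right; left.
Qed.

End Child.

Local Open Scope ring_scope.

Lemma sum_const_cnt (R : nmodType) (s : seq nat) (P : pred nat) (x : R) :
  \sum_(k <- s | P k) x = x *+ count P s.
Proof.
elim: s => [|y s IH]; first by rewrite big_nil.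
rewrite big_cons IH /=. case: (P y) => /=; by rewrite ?mulrS ?add0n.
Qed.

Lemma sum_tail (R : nmodType) (P : pred nat) (F : nat -> R) c N : (c <= N)%N ->
  (forall k, (c <= k < N)%N -> P k) ->
  \sum_(k <- iota 0 N | P k && ~~ (k < c)%N) F k = \sum_(j < N - c) F (c + j)%N.
Proof.
move=> HcN HP. rewrite -(subnKC HcN) iotaD big_cat /= add0n.
rewrite big_seq_cond big_pred0 ?add0r; last first.
  by move=> k; rewrite mem_iota add0n; case: (k < c)%N; rewrite ?andbF ?andbT.
rewrite big_seq_cond (eq_bigl (fun k => k \in iota c (N - c))); last first.
  move=> k; rewrite mem_iota. case H: (c <= k < c + (N - c))%N => //=.
  rewrite HP; last by rewrite subnKC in H.
  move/andP: H => [H _]; by rewrite -leqNgt H.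
rewrite -big_seq -(addn0 c) iotaDl big_map addn0 -{1}(subn0 (N - c)%N) -/(index_iota 0 (N-c)).
by rewrite addKn big_mkord.
Qed.

Section Parent.
Variable R : numFieldType.
Variables u v : R.
Variable e : seq nat.
Hypothesis He : inI201_210 e.
Hypothesis Hn : (0 < size e)%N.

Definition term (s : seq nat) := u ^+ param_p s * v ^+ param_q s.

Let n := size e.
Let a := last 0%N e.
Let m := mx e.
Let P := param_p e.
Let Q := param_q e.

Lemma Va : V e a.
Proof. apply/Ve_iff => //; exact: V2. Qed.

Lemma Vm x : (m <= x)%N -> (x <= n)%N -> V e x.
Proof. move=> H1 H2; apply/Ve_iff => //; exact: V1. Qed.

Lemma PP : \sum_(k <- iota 0 n.+1 | V e k) term (rcons e k) =
  \sum_(j < P.+1) u ^+ (P.+1 - j) * v ^+ (Q + j) + (u ^+ P.+2 * v) *+ (Q - 1).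
Proof.
have Han := a_lt_n He Hn. have Ham := a_le_m He Hn. have Hmn := m_lt_n He Hn.
rewrite -/n -/a -/m in Han Ham Hmn.
have -> : \sum_(k <- iota 0 n.+1 | V e k) term (rcons e k) =
  \sum_(k <- iota 0 n.+1 | V e k && (k < m)%N) term (rcons e k) +
  \sum_(k <- iota 0 n.+1 | V e k && ~~ (k < m)%N) term (rcons e k) by apply: bigID.
rewrite (@sum_tail _ (V e) _ m n.+1); [|lia|by move=> k /andP [H1 H2]; apply: Vm; lia].
have Eq2 : forall j, (j < n.+1 - m)%N ->
  param_q (rcons e (m + j)) = count (fun x => (x <= m + j)%N && V e x) (iota 0 n.+1).
  move=> j Hj; apply: CH1_q => //; [apply: Vm; lia|lia].
have Ep2 : forall j, (j < n.+1 - m)%N -> param_p (rcons e (m + j)) = (n.+1 - (m + j))%N.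
  move=> j Hj; apply: CH1_p => //; [apply: Vm; lia|lia].
case: (ltngtP a m) => Ham'; [|lia|]; last first.
- (* a = m *)
  have EP : P = (n - a)%N.
    rewrite /P pq_def_p -/a -/n (@cnt_ext _ (fun x => (a.+1 <= x) && (x < n.+1))%N).
      rewrite cnt_int; lia.
    move=> x Hx; apply/andP/andP => -[H1 H2]; split => //. apply: Vm; lia.
  have EQ : Q = (count (fun k => V e k && (k < m)%N) (iota 0 n.+1)).+1.
    rewrite /Q pq_def_q -/a -/n (@cnt_ext _ (fun x => (V e x && (x < m)) || ((a <= x) && (x < a.+1)))%N).
      rewrite cnt_or ?cnt_int; first lia.
      move=> x; apply/negP => /andP [/andP [_ H1] /andP [H2 _]]; lia.
    move=> x Hx. have VA := Va. rewrite -/a -Ham' in VA *.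
    case Hv: (V e x); case: (ltngtP x a) => Hxa; rewrite /= ?andbT ?andbF ?orbF ?orbT //=; try lia.
    all: try (symmetry; apply/negbTE/negP; move=> ?; lia).
    all: try by subst x; rewrite Hv in VA.
  rewrite (eq_bigr (fun _ => u ^+ P.+2 * v)); last first.
    move=> k /andP [Hk Hkm]; rewrite /term CH2_p // CH2_q // expr1. congr (u ^+ _ * v). lia.
  have EQ1 : (Q - 1)%N = count (fun k => V e k && (k < m)%N) (iota 0 n.+1) by rewrite EQ subn1.
  rewrite sum_const_cnt EQ1 addrC.
  have -> : (n.+1 - m = P.+1)%N by lia.
  congr (_ + _); apply: eq_bigr => -[j Hj] _ /=.
  rewrite /term Ep2 ?Eq2; try lia. congr (u ^+ _ * v ^+ _); first lia.
  rewrite (@cnt_ext _ (fun x => ((x <= a)%N && V e x) || ((a.+1 <= x) && (x < (m + j).+1))%N)).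
    rewrite cnt_or ?cnt_int; first by rewrite /Q pq_def_q -/a -/n; lia.
    move=> x; apply/negP => /andP [/andP [H1 _] /andP [H2 _]]; lia.
  move=> x Hx. case: (leqP x a) => Hxa /=.
    rewrite orbF. have -> : (x <= m + j)%N by lia. done.
  rewrite ltnS; case: (leqP x (m + j)) => H /=; last done. apply: Vm; lia.
- (* a < m *)
  have EP : P = (n.+1 - m)%N.
    rewrite /P pq_def_p -/a -/n (@cnt_ext _ (fun x => (m <= x) && (x < n.+1))%N).
      rewrite cnt_int; lia.
    move=> x Hx; apply/andP/andP => -[H1 H2].
    + have := V3 He Hn Ham' (proj1 (Ve_iff He x) H2). rewrite -/a -/m. lia.
    + split; [lia|apply: Vm; lia].
  have EQ : Q = 1%N.
    rewrite /Q pq_def_q -/a -/n (@cnt_ext _ (fun x => (a <= x) && (x < a.+1))%N).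
      rewrite cnt_int; lia.
    move=> x Hx; apply/andP/andP => -[H1 H2].
    + have := V3 He Hn Ham' (proj1 (Ve_iff He x) H2). rewrite -/a -/m. lia.
    + have -> : x = a by lia. split => //; exact: Va.
  rewrite EQ subnn mulr0n addr0 big_ord_recl /=.
  rewrite -(big_filter (iota 0 n.+1)).
  have -> : [seq i <- iota 0 n.+1 | V e i && (i < m)%N] = [:: a].
    rewrite (@eq_filter _ _ (pred1 a)) ?filter_pred1_uniq ?iota_uniq ?mem_iota //; first lia.
    move=> x /=. apply/andP/eqP.
    + move=> [H1 H2]. have := V3 He Hn Ham' (proj1 (Ve_iff He x) H1). rewrite -/a -/m. lia.
    + move=> ->; split => //; exact: Va.
  rewrite big_cons big_nil addr0 /term CH2_p ?CH2_q //; try exact: Va.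
  rewrite expr1 subn0 /=. rewrite -/n -/m.
  have -> : (n.+2 - m = P.+1)%N by lia.
  congr (_ + _).
  have -> : (n.+1 - m = P)%N by lia.
  apply: eq_bigr => -[j Hj] _ /=.
  rewrite /bump /= add1n subSS Ep2 ?Eq2; try lia. congr (u ^+ _ * v ^+ _); first lia.
  rewrite (@cnt_ext _ (fun x => ((a <= x) && (x < a.+1)) || ((m <= x) && (x < (m + j).+1)))%N).
    rewrite cnt_or ?cnt_int; try lia.
  move=> x Hx. apply/andP/orP.
  + move=> [H1 H2]. have := V3 He Hn Ham' (proj1 (Ve_iff He x) H2). rewrite -/a -/m => H.
    case: H => H; [left|right]; apply/andP; lia.
  + move=> [/andP [H1 H2]|/andP [H1 H2]].
    * have Ex : x = a by lia. subst x. split; [lia|exact: Va].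
    * split; [lia|apply: Vm; lia].
Qed.

End Parent.

Fixpoint W (n : nat) : seq (seq nat) :=
  if n is n'.+1 then [seq rcons e k | e <- W n', k <- [seq k <- iota 0 n'.+1 | V e k]]
  else [:: [::]].

Lemma memW n s : (s \in W n) = (size s == n) && inI201_210 s.
Proof.
elim: n s => [|n IH] s.
- rewrite /= inE size_eq0. by case: s.
- apply/idP/idP.
  + move=> /allpairsPdep [e [k [He Hk ->]]].
    rewrite mem_filter in Hk. move/andP: Hk => [Hk _].
    rewrite IH in He. move/andP: He => [/eqP Hs _].
    by rewrite size_rcons Hs eqxx; exact: Hk.
  + move=> /andP [/eqP Hs Hi]. case/lastP: s Hs Hi => [|e k] //.
    rewrite size_rcons => -[Hs] Hi.
    apply/allpairsPdep; exists e, k; split => //.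
    * rewrite IH Hs eqxx /=. by have [] := proj1 (inI_rcons e k) Hi.
    * rewrite mem_filter mem_iota add0n ltnS -Hs. apply/andP; split; first exact: Hi. exact: V_le.
Qed.

Lemma uniqW n : uniq (W n).
Proof.
elim: n => [|n IH]; first by [].
change (uniq [seq rcons e k | e <- W n, k <- [seq k <- iota 0 n.+1 | V e k]]).
apply: allpairs_uniq_dep => //.
- by move=> e _; rewrite filter_uniq // iota_uniq.
- move=> [x1 y1] [x2 y2] _ _ /= /rcons_inj [-> ->]. done.
Qed.

Lemma map_val_pmap n (s : seq nat) : all (fun x => x < n)%N s ->
  map val (pmap (insub : nat -> option 'I_n) s) = s.
Proof.
elim: s => [|x s IH] //= /andP [Hx Hs].
by rewrite insubT /= IH.
Qed.

Lemma sum_tuples (T : nmodType) n (P : pred (seq nat)) (F : seq nat -> T) :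
  \sum_(t : n.-tuple 'I_n | inI201_210 (map val t) && P (map val t)) F (map val t)
  = \sum_(s <- W n | P s) F s.
Proof.
pose h := fun t : n.-tuple 'I_n => map val (val t).
rewrite (eq_bigl (fun t => (t \in predT) && (inI201_210 (h t) && P (h t)))) //.
rewrite -(big_image_cond _ _ h predT (fun s => inI201_210 s && P s) F).
rewrite -big_filter_cond.
apply: perm_big. apply: uniq_perm.
- rewrite filter_uniq // map_inj_uniq ?enum_uniq //.
  move=> t1 t2 /= /(inj_map val_inj) H. exact: val_inj.
- exact: uniqW.
- move=> s. rewrite mem_filter memW. apply/andP/andP => -[H1 H2].
  + split => //. move/imageP: H2 => [t _ ->]. by rewrite /h size_map size_tuple.
  + split => //. move/eqP: H1 => Hs.
    have Hall : all (fun x => x < n)%N s.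
      apply/(all_nthP 0%N) => i Hi. have Hs2 : @size nat s = n := Hs. have := inI_entry H2 Hi. lia.
    have Hsz : size (pmap (insub : nat -> option 'I_n) s) == n.
      by rewrite -(size_map val) map_val_pmap // Hs.
    apply/imageP. exists (Tuple Hsz) => //. by rewrite /h /= map_val_pmap.
Qed.


Lemma ALG (R : numFieldType) (u v : R) (P Q : nat) : u != 0 -> u != v -> (1 <= Q)%N ->
  \sum_(j < P.+1) u ^+ (P.+1 - j) * v ^+ (Q + j) + (u ^+ P.+2 * v) *+ (Q - 1) =
  (u * (u ^+ P * v ^+ Q) - v * (v ^+ P * v ^+ Q)) / (1 - v / u)
  + u ^+ 2 * v * (u ^+ P * Q%:R - u ^+ P * 1 ^+ Q).
Proof.
move=> Hu Huv HQ.
set S := \sum_(j < P.+1) u ^+ (P - j) * v ^+ j.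
have Hsub : u ^+ P.+1 - v ^+ P.+1 = (u - v) * S by rewrite subrXX.
have E1 : \sum_(j < P.+1) u ^+ (P.+1 - j) * v ^+ (Q + j) = u * v ^+ Q * S.
  rewrite /S mulr_sumr; apply: eq_bigr => -[j Hj] _ /=.
  rewrite subSn // exprS exprD. ring.
rewrite E1 -mulr_natr natrB // expr1n mulr1.
rewrite !exprS in Hsub *. rewrite expr0 mulr1.
have Huv' : u - v != 0 by rewrite subr_eq0.
have H1 : 1 - v / u != 0.
  rewrite -(divff Hu) -mulrBl mulf_neq0 // invr_eq0 //.
have -> : v * (v ^+ P * v ^+ Q) = (v * v ^+ P) * v ^+ Q by ring.
have -> : v * v ^+ P = u * u ^+ P - (u - v) * S by rewrite -Hsub; ring.
field. by rewrite Hu Huv'.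
Qed.

Lemma posPQ s : inI201_210 s -> (0 < size s)%N ->
  (0 < param_p s)%N && (0 < param_q s)%N.
Proof.
move=> He Hn. have Han := a_lt_n He Hn. have Ham := a_le_m He Hn. have Hmn := m_lt_n He Hn.
rewrite pq_def_p pq_def_q -!has_count; apply/andP; split; apply/hasP.
- exists (size s); first by rewrite mem_iota; lia.
  rewrite Han /=. apply: Vm => //; lia.
- exists (last 0%N s); first by rewrite mem_iota; lia.
  by rewrite leqnn /=; apply: Va.
Qed.

Lemma fpolyE (R : numFieldType) n (u : R) :
  fpoly n u = \sum_(s <- W n | (0 < param_p s)%N && (0 < param_q s)%N)
                 u ^+ param_p s *: 'X ^+ param_q s.
Proof. by rewrite /fpoly (@sum_tuples _ n (fun s => (0 < param_p s)%N && (0 < param_q s)%N) (fun s => u ^+ param_p s *: 'X ^+ param_q s)). Qed.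

Lemma fnE (R : numFieldType) n (u v : R) : (0 < n)%N ->
  fn n u v = \sum_(s <- W n) u ^+ param_p s * v ^+ param_q s.
Proof.
move=> Hn. rewrite /fn fpolyE horner_sum big_seq_cond [RHS]big_seq_cond.
apply: eq_big => s.
- case Hs: (s \in W n) => //=. move: Hs; rewrite memW => /andP [/eqP Hsz Hi].
  by apply: posPQ => //; rewrite Hsz.
- by move=> _; rewrite hornerZ hornerXn.
Qed.

Lemma derivE1 (R : numFieldType) n (u : R) : (0 < n)%N ->
  (fpoly n u)^`().[1] = \sum_(s <- W n) u ^+ param_p s * (param_q s)%:R.
Proof.
move=> Hn. rewrite fpolyE.
have -> : forall (r : seq (seq nat)) (Pr : pred (seq nat)),
   (\sum_(s <- r | Pr s) u ^+ param_p s *: 'X ^+ param_q s)^`() =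
   \sum_(s <- r | Pr s) (u ^+ param_p s *: 'X ^+ param_q s)^`().
  move=> r Pr; elim: r => [|x r IH]; first by rewrite !big_nil deriv0.
  rewrite !big_cons; case: (Pr x) => //. by rewrite derivD IH.
rewrite horner_sum big_seq_cond [RHS]big_seq_cond.
apply: eq_big => s.
- case Hs: (s \in W n) => //=. move: Hs; rewrite memW => /andP [/eqP Hsz Hi].
  by apply: posPQ => //; rewrite Hsz.
- move=> _; rewrite derivZ derivXn hornerZ hornerMn hornerXn expr1n. by rewrite mulr_natr.
Qed.

Unset Implicit Arguments.
Theorem proposition4p6 (R : numFieldType) :
  (forall u v : R, fn 1 u v = u * v) /\
  (forall (n : nat) (u v : R), (2 <= n)%N -> u != 0 -> u != v ->
     fn n u v =
       (u * fn n.-1 u v - v * fn n.-1 v v) / (1 - v / u)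
       + u ^+ 2 * v * ((fpoly n.-1 u)^`().[1] - fn n.-1 u 1)).
Proof.
split.
- move=> u v. rewrite fnE //.
  have -> : W 1 = [:: [:: 0%N]] by [].
  rewrite big_cons big_nil addr0.
  have -> : param_p [:: 0%N] = 1%N by [].
  have -> : param_q [:: 0%N] = 1%N by [].
  by rewrite !expr1.
- case=> [|n] // u v H2 Hu Huv. change (n.+1.-1) with n.
  have Hn : (0 < n)%N by lia.
  rewrite !fnE // derivE1 //.
  change (W n.+1) with [seq rcons e k | e <- W n, k <- [seq k <- iota 0 n.+1 | V e k]].
  rewrite big_allpairs_dep.
  have -> : forall (F G : seq nat -> R), (u * \sum_(s <- W n) F s - v * \sum_(s <- W n) G s) / (1 - v / u)
     = \sum_(s <- W n) (u * F s - v * G s) / (1 - v / u).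
    move=> F G. rewrite -mulr_suml; congr (_ * _).
    by rewrite !mulr_sumr -sumrB.
  have -> : forall (F G : seq nat -> R), u ^+ 2 * v * (\sum_(s <- W n) F s - \sum_(s <- W n) G s)
     = \sum_(s <- W n) u ^+ 2 * v * (F s - G s).
    move=> F G. by rewrite -sumrB mulr_sumr.
  rewrite -big_split. rewrite big_seq [RHS]big_seq. apply: eq_bigr => e.
  rewrite memW => /andP [/eqP Hsz He].
  have Hsz' : @size nat e = n := Hsz.
  have Hne : (0 < size e)%N by rewrite Hsz'.
  rewrite big_filter -Hsz'.
  have := @PP R u v e He Hne. rewrite /term => ->.
  apply: ALG => //. by have /andP [_ ->] := posPQ He Hne.
Qed.
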